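(* Let $K=K(p,q)$ be a 2-bridge knot, with $\sigma$, $A_{p,q},B_{p,q},D_{p,q}$ as in the context. For any $r\in\mathbb{Q}$, the fundamental group $\pi_1(S^3_r(K))$ admits a non-trivial $SL(2,\mathbb{R})$ representation if either the system $$A_{p,q}(t,u)=(t-t^{-1})B_{p,q}(t,u),\qquad t^{r-2\sigma}\big((t-t^{-1})^2-u\big)\big(B_{p,q}(t,u)\big)^2=1$$ has a solution $(t,u)\in\mathbb{R}^2$ with $t\notin\{-1,0,1\}$, or a solution with $t=e^{i\theta}$, $t\neq\pm1$, and $u\in(-\infty,-4\sin^2\theta)\cup(0,\infty)$; or if $r$, written in lowest terms, has odd numerator and odd denominator and the system $$A_{p,q}(-1,u)=0,\qquad -(r-2\sigma)\,u\,B_{p,q}(-1,u)=2D_{p,q}(-1,u)$$ has a solution $u\in\mathbb{R}$.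
   Context: $K(p,q)$ denotes the 2-bridge knot with $p,q$ odd integers, $q\in(-p,p)$. For $1\le i\le p-1$ let $e_i=(-1)^{\lfloor iq/p\rfloor}$ and $\sigma=\sum_{i=1}^{p-1}e_i$. For $t\in\mathbb{C}\setminus\{0\}$, $u\in\mathbb{C}$ let $C=\begin{pmatrix}t&1\\0&t^{-1}\end{pmatrix}$, $D=\begin{pmatrix}t&0\\-u&t^{-1}\end{pmatrix}$, and $W=C^{e_1}D^{e_2}\cdots C^{e_{p-2}}D^{e_{p-1}}=\begin{pmatrix}a&b\\c&d\end{pmatrix}$; the entries $a,b,d$ are Laurent polynomials in $\mathbb{Z}[t,t^{-1},u]$ denoted $A_{p,q}(t,u)$, $B_{p,q}(t,u)$, $D_{p,q}(t,u)$. $S^3_r(K)$ denotes Dehn surgery on $K$ with slope $r$. *)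

(* Defs.v *)
From HB Require Import structures.
From mathcomp Require Import all_boot all_order all_algebra.
From mathcomp Require Import all_classical all_reals all_analysis.
From mathcomp Require Import complex.
Set Implicit Arguments. Unset Strict Implicit. Unset Printing Implicit Defensive.
Import Order.TTheory GRing.Theory Num.Theory.
Local Open Scope ring_scope.

(** e_i = (-1)^{floor(i q / p)}, encoded as a boolean: [true] means e_i = -1.
    [(i q %/ p)%Z] is floor division (intdiv, positive divisor). *)
Definition esign (p : nat) (q : int) (i : nat) : bool :=
  odd `|((i%:Z * q) %/ p%:Z)%Z|%N.

Definition sgnb (b : bool) : int := if b then -1 else 1.

Definition sigma (p : nat) (q : int) : int :=
  \sum_(1 <= i < p) sgnb (esign p q i).

Definition mpowb (F : comUnitRingType) (M : 'M[F]_2) (e : bool) : 'M[F]_2 :=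
  if e then invmx M else M.

Definition wordW (F : comUnitRingType) (p : nat) (q : int) (X Y : 'M[F]_2)
  : 'M[F]_2 :=
  \prod_(1 <= i < p) mpowb (if odd i then X else Y) (esign p q i).

Definition wordWrev (F : comUnitRingType) (p : nat) (q : int) (X Y : 'M[F]_2)
  : 'M[F]_2 :=
  \prod_(1 <= i < p) mpowb (if odd (p - i) then X else Y) (esign p q (p - i)).

Definition mx2 (F : Type) (a b c d : F) : 'M[F]_2 :=
  \matrix_(i < 2, j < 2)
     if i == 0 :> nat then (if j == 0 :> nat then a else b)
     else (if j == 0 :> nat then c else d).

Definition Cmx (F : comUnitRingType) (t : F) : 'M[F]_2 := mx2 t 1 0 t^-1.
Definition Dmx (F : comUnitRingType) (t u : F) : 'M[F]_2 := mx2 t 0 (- u) t^-1.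
Definition Wmx (F : comUnitRingType) (p : nat) (q : int) (t u : F) : 'M[F]_2 :=
  wordW p q (Cmx t) (Dmx t u).

Definition Apq (F : comUnitRingType) p q (t u : F) : F := Wmx p q t u 0 0.
Definition Bpq (F : comUnitRingType) p q (t u : F) : F := Wmx p q t u 0 1.
Definition Dpq (F : comUnitRingType) p q (t u : F) : F := Wmx p q t u 1 1.

(** * The fundamental group of S^3_r(K(p,q)) via its standard presentation
    pi_1(S^3_r(K)) = < a, b | w a = b w,  a^m lambda^n = 1 >,
    where w = a^{e_1} b^{e_2} ... b^{e_{p-1}}, the meridian is a, the
    longitude is lambda = w* w a^{-2 sigma}, and r = m/n in lowest terms.
    A homomorphism pi_1(S^3_r(K)) -> SL(2,R) is the same as a pair of
    matrices (images of the generators a, b) in SL(2,R) satisfying the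
    relators; it is non-trivial iff it does not send both generators to 1. *)
Definition longitude (F : comUnitRingType) p q (a b : 'M[F]_2) : 'M[F]_2 :=
  wordWrev p q a b * wordW p q a b * a ^ (- (2 * sigma p q)).

Definition nontrivial_SL2_rep_surgery (R : realType) (p : nat) (q : int)
  (r : rat) : Prop :=
  exists a b : 'M[R]_2,
    [/\ \det a = 1, \det b = 1,
        wordW p q a b * a = b * wordW p q a b,
        a ^ numq r * longitude p q a b ^ denq r = 1
      & ~ (a = 1 /\ b = 1)].

(** Hypothesis (i): a real solution (t,u), t not in {-1,0,1}, of
      A(t,u) = (t - t^-1) B(t,u),  t^{r-2 sigma}((t-t^-1)^2 - u) B(t,u)^2 = 1.
    The (multivalued, for r = m/n) power t^{r-2 sigma} is read as
    t^{-2 sigma} z for a value z of t^{m/n}, i.e. z^n = t^m. *)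
Definition real_solution (R : realType) p q (r : rat) : Prop :=
  exists t u : R,
    [/\ t != -1, t != 0, t != 1,
        Apq p q t u = (t - t^-1) * Bpq p q t u
      & exists z : R, z ^ denq r = t ^ numq r /\
          z * t ^ (- (2 * sigma p q)) * ((t - t^-1) ^+ 2 - u)
            * (Bpq p q t u) ^+ 2 = 1].

Definition unit_circle_solution (R : realType) p q (r : rat) : Prop :=
  exists (theta u : R) (t : R[i]),
    [/\ t = Complex (cos theta) (sin theta), (t != 1) && (t != -1),
        (u < - (4 * (sin theta) ^+ 2)) || (0 < u),
        Apq p q t (real_complex R u) = (t - t^-1) * Bpq p q t (real_complex R u)
      & exists z : R[i], z ^ denq r = t ^ numq r /\
          z * t ^ (- (2 * sigma p q)) * ((t - t^-1) ^+ 2 - (real_complex R u))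
            * (Bpq p q t (real_complex R u)) ^+ 2 = 1].

Definition parabolic_solution (R : realType) p q (r : rat) : Prop :=
  [/\ odd `|numq r|%N, odd `|denq r|%N &
    exists u : R,
      Apq p q (-1) u = 0 /\
      - (ratr r - (2 * sigma p q)%:~R) * u * Bpq p q (-1) u
        = 2 * Dpq p q (-1) u].

(* Main.v *)
Require Import Defs.
From HB Require Import structures.
From mathcomp Require Import all_boot all_order all_algebra.
From mathcomp Require Import all_classical all_reals all_analysis.
From mathcomp Require Import complex zify.
From mathcomp Require Import ring lra.
Import Order.TTheory GRing.Theory Num.Theory.
Local Open Scope ring_scope.

Ltac fld := field; repeat (apply/andP; split); rewrite ?oner_neq0 //.

Section MX2.
Variable F : fieldType.
Implicit Types a b c d : F.

Lemma mx2_00 a b c d : mx2 a b c d 0 0 = a. Proof. by rewrite mxE. Qed.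
Lemma mx2_01 a b c d : mx2 a b c d 0 1 = b. Proof. by rewrite mxE. Qed.
Lemma mx2_10 a b c d : mx2 a b c d 1 0 = c. Proof. by rewrite mxE. Qed.
Lemma mx2_11 a b c d : mx2 a b c d 1 1 = d. Proof. by rewrite mxE. Qed.

Lemma ord2_cases (i : 'I_2) : i = 0 \/ i = 1.
Proof. case: i => [[|[|k]] Hk]; [left|right|by []]; exact: val_inj. Qed.

Lemma mx2E (M : 'M[F]_2) : M = mx2 (M 0 0) (M 0 1) (M 1 0) (M 1 1).
Proof.
apply/matrixP => i j; rewrite mxE.
by case: (ord2_cases i) => ->; case: (ord2_cases j) => ->.
Qed.

Lemma mx2P a b c d a' b' c' d' :
  a = a' -> b = b' -> c = c' -> d = d' -> mx2 a b c d = mx2 a' b' c' d'.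
Proof. by move=> -> -> -> ->. Qed.

Lemma mx2M a b c d a' b' c' d' :
  mx2 a b c d * mx2 a' b' c' d' =
  mx2 (a * a' + b * c') (a * b' + b * d') (c * a' + d * c') (c * b' + d * d').
Proof.
apply/matrixP => i j; rewrite !mxE !big_ord_recl big_ord0 !mxE /= addr0.
by case: (ord2_cases i) => ->; case: (ord2_cases j) => ->.
Qed.

Lemma mx2_1 : (1 : 'M[F]_2) = mx2 1 0 0 1.
Proof.
apply/matrixP => i j; rewrite !mxE.
by case: (ord2_cases i) => ->; case: (ord2_cases j) => ->.
Qed.

Lemma mx2N a b c d : - mx2 a b c d = mx2 (-a) (-b) (-c) (-d).
Proof.
apply/matrixP => i j; rewrite !mxE.
by case: (ord2_cases i) => ->; case: (ord2_cases j) => ->.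
Qed.

Lemma mx2Z k a b c d : k *: mx2 a b c d = mx2 (k * a) (k * b) (k * c) (k * d).
Proof.
apply/matrixP => i j; rewrite !mxE.
by case: (ord2_cases i) => ->; case: (ord2_cases j) => ->.
Qed.

Lemma mx2T a b c d : (mx2 a b c d)^T = mx2 a c b d.
Proof.
apply/matrixP => i j; rewrite !mxE.
by case: (ord2_cases i) => ->; case: (ord2_cases j) => ->.
Qed.

Lemma det_mx2 a b c d : \det (mx2 a b c d) = a * d - b * c.
Proof.
rewrite (expand_det_row _ 0) !big_ord_recl big_ord0 /cofactor !det_mx11 !mxE /=.
rewrite !expr0 !expr1 ?mul1r; ring.
Qed.

Lemma det_mx2' (M : 'M[F]_2) : \det M = M 0 0 * M 1 1 - M 0 1 * M 1 0.
Proof. by rewrite {1}[M]mx2E det_mx2. Qed.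

Lemma inv_mx2 a b c d : a * d - b * c != 0 ->
  (mx2 a b c d)^-1 = mx2 (d / (a * d - b * c)) (- b / (a * d - b * c))
                        (- c / (a * d - b * c)) (a / (a * d - b * c)).
Proof.
move=> u.
have uM : mx2 a b c d \is a GRing.unit by rewrite unitmxE det_mx2 unitfE.
have H : mx2 a b c d * mx2 (d / (a * d - b * c)) (- b / (a * d - b * c))
                        (- c / (a * d - b * c)) (a / (a * d - b * c)) = 1.
  by rewrite mx2M mx2_1; apply: mx2P; fld.
by rewrite -[RHS](mulKr uM) H mulr1.
Qed.
End MX2.
Lemma esign_sym (p : nat) (q : int) (i : nat) :
  odd `|q|%N -> coprime p `|q| -> (0 < i < p)%N ->
  esign p q (p - i) = esign p q i.
Proof.
move=> oq cop /andP[i0 ip].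
have p0 : (p%:Z != 0) by rewrite eqz_nat -lt0n (leq_trans i0 (ltnW ip)).
rewrite /esign.
set x := (i%:Z * q).
have nd : (x %% p)%Z != 0.
  apply/negP => /eqP/dvdz_mod0P; rewrite dvdzE /x abszM /= mulnC Gauss_dvdr //.
  move=> /(dvdn_leq i0); rewrite leqNgt ip //.
have e1 : ((p - i)%N%:Z * q) = q * p + (- x).
  rewrite /x -subzn ?(ltnW ip) //; ring.
rewrite e1 divzMDl //.
have ex := divz_eq x p.
set k := (x %/ p)%Z in ex *; set rm := (x %% p)%Z in ex nd *.
have r0 : 0 <= rm by apply: modz_ge0.
have r1 : rm < `|p%:Z| by apply: ltz_mod.
have e2 : - x = (- k - 1) * p + (p%:Z - rm) by rewrite ex; ring.
rewrite e2 divzMDl // divz_small; last first.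
  apply/andP; split; rewrite /=; lia.
rewrite addr0; lia.
Qed.

Section Words.
Variable F : fieldType.

Lemma prod_intertwine (I : Type) (r : seq I) (f g : I -> 'M[F]_2) (K : 'M[F]_2) :
  (forall i, K * f i = g i * K) ->
  K * \prod_(i <- r) f i = (\prod_(i <- r) g i) * K.
Proof.
move=> H; elim: r => [|x r IH]; first by rewrite !big_nil mulr1 mul1r.
by rewrite !big_cons mulrA H -mulrA IH mulrA.
Qed.

Lemma prod_tr_intertwine (I : Type) (r : seq I) (f g : I -> 'M[F]_2) (K : 'M[F]_2) :
  (forall i, K * (f i)^T = g i * K) ->
  K * (\prod_(i <- r) f i)^T = (\prod_(i <- rev r) g i) * K.
Proof.
move=> H; elim: r => [|x r IH].
  by rewrite !big_nil trmx1 mulr1 mul1r.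
rewrite big_cons rev_cons big_rcons -mulmxE trmx_mul !mulmxE mulrA IH.
by rewrite -mulrA H mulrA.
Qed.

Lemma rev_iota1 n : rev (iota 1 n) = map (fun i => n.+1 - i)%N (iota 1 n).
Proof.
apply: (@eq_from_nth _ 0%N); first by rewrite size_rev size_map.
move=> k; rewrite size_rev size_iota => kn.
rewrite nth_rev ?size_iota // (nth_map 0%N) ?size_iota // !nth_iota //; last first.
  by lia.
lia.
Qed.

Lemma wordWrev_swap p q (X Y : 'M[F]_2) :
  odd p -> odd `|q|%N -> coprime p `|q| ->
  wordWrev p q X Y = wordW p q Y X.
Proof.
move=> op oq cop; rewrite /wordWrev /wordW.
apply: eq_big_nat => i /andP[i0 ip].
rewrite esign_sym ?i0 ?ip // oddB ?(ltnW ip) // op.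
by case: (odd i).
Qed.

Lemma wordW_intertwine p q (X Y X' Y' K : 'M[F]_2) :
  K * X = X' * K -> K * Y = Y' * K ->
  K * X^-1 = X'^-1 * K -> K * Y^-1 = Y'^-1 * K ->
  K * wordW p q X Y = wordW p q X' Y' * K.
Proof.
move=> h1 h2 h3 h4; rewrite /wordW; apply: prod_intertwine => i.
by rewrite /mpowb; case: (odd i); case: (esign p q i).
Qed.

Lemma wordW_tr p q (X Y Delta : 'M[F]_2) :
  odd p -> odd `|q|%N -> coprime p `|q| ->
  Delta * X^T = Y * Delta -> Delta * Y^T = X * Delta ->
  Delta * (X^-1)^T = Y^-1 * Delta -> Delta * (Y^-1)^T = X^-1 * Delta ->
  Delta * (wordW p q X Y)^T = wordW p q X Y * Delta.
Proof.
move=> op oq cop h1 h2 h3 h4; rewrite /wordW.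
rewrite (@prod_tr_intertwine _ _ _
   (fun i => mpowb (if odd i then Y else X) (esign p q i))); last first.
  by move=> i; rewrite /mpowb; case: (odd i); case: (esign p q i).
congr (_ * _).
case: p op oq cop => [//|p] op oq cop.
rewrite /index_iota subSS subn0 rev_iota1 big_map.
apply: eq_big_seq => i; rewrite mem_iota => /andP[i0 ip].
rewrite add1n in ip.
rewrite esign_sym ?i0 ?ip // oddB ?(ltnW ip) // op.
by case: (odd i).
Qed.
End Words.

Section UT.
Variable F : fieldType.

Lemma ut_exprn (a b d : F) (n : nat) :
  exists x, (mx2 a b 0 d)^+n = mx2 (a^+n) x 0 (d^+n).
Proof.
elim: n => [|n [x IH]]; first by exists 0; rewrite !expr0 mx2_1.
exists (a * x + b * d ^+ n); rewrite exprS IH mx2M !exprS; apply: mx2P; ring.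
Qed.

Lemma ut_exprz (a b d : F) (n : int) : a != 0 -> d != 0 ->
  exists x, (mx2 a b 0 d)^n = mx2 (a^n) x 0 (d^n).
Proof.
move=> a0 d0; case: n => k.
  by have [x H] := ut_exprn a b d k; exists x; rewrite /exprz /= H.
have [x H] := ut_exprn a b d k.+1.
have ak : a ^+ k.+1 != 0 by rewrite expf_neq0.
have dk : d ^+ k.+1 != 0 by rewrite expf_neq0.
exists (- x / (a ^+ k.+1 * d ^+ k.+1 - x * 0)).
rewrite /exprz /= H inv_mx2; last by rewrite mulr0 subr0 mulf_neq0.
apply: mx2P; rewrite ?mulr0 ?subr0 ?oppr0 ?mul0r //.
  by rewrite invfM mulrCA mulfV // mulr1.
by rewrite invfM mulrA mulfV // mul1r.
Qed.
End UT.

Lemma invmx_inv (F : fieldType) (M : 'M[F]_2) : invmx M = M^-1.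
Proof. by []. Qed.

Section Riley.
Variable F : fieldType.
Variables (p : nat) (q : int).
Hypotheses (op : odd p) (oq : odd `|q|%N) (cop : coprime p `|q|).
Variables (t u : F).
Hypothesis t0 : t != 0.

Lemma Cmx_inv : (Cmx t)^-1 = mx2 t^-1 (-1) 0 t.
Proof.
rewrite /Cmx inv_mx2; last by rewrite mulfV // mulr0 subr0 oner_neq0.
by apply: mx2P; fld.
Qed.

Lemma Dmx_inv : (Dmx t u)^-1 = mx2 t^-1 0 u t.
Proof.
rewrite /Dmx inv_mx2; last by rewrite mulfV // mul0r subr0 oner_neq0.
by apply: mx2P; fld.
Qed.

Lemma W_10 : Wmx p q t u 1 0 = - u * Wmx p q t u 0 1.
Proof.
have H := @wordW_tr F p q (Cmx t) (Dmx t u) (mx2 1 0 0 (- u)) op oq cop.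
have /H {}H : mx2 1 0 0 (- u) * (Cmx t)^T = Dmx t u * mx2 1 0 0 (- u).
  by rewrite /Cmx /Dmx mx2T !mx2M; apply: mx2P; ring.
have /H {}H : mx2 1 0 0 (- u) * (Dmx t u)^T = Cmx t * mx2 1 0 0 (- u).
  by rewrite /Cmx /Dmx mx2T !mx2M; apply: mx2P; ring.
have /H {}H : mx2 1 0 0 (- u) * ((Cmx t)^-1)^T = (Dmx t u)^-1 * mx2 1 0 0 (- u).
  by rewrite Cmx_inv Dmx_inv mx2T !mx2M; apply: mx2P; ring.
have /H {}H : mx2 1 0 0 (- u) * ((Dmx t u)^-1)^T = (Cmx t)^-1 * mx2 1 0 0 (- u).
  by rewrite Cmx_inv Dmx_inv mx2T !mx2M; apply: mx2P; ring.
have := congr1 (fun M : 'M[F]_2 => M 0 1) H.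
rewrite -/(Wmx p q t u) [Wmx p q t u]mx2E mx2T !mx2M !mx2_01.
rewrite mul1r mul0r addr0 => ->; rewrite mx2_10; ring.
Qed.

Lemma riley_rel : Apq p q t u = (t - t^-1) * Bpq p q t u ->
  Wmx p q t u * Cmx t = Dmx t u * Wmx p q t u.
Proof.
rewrite /Apq /Bpq => hA.
have h10 := W_10.
rewrite [Wmx p q t u]mx2E /Cmx /Dmx !mx2M h10 hA; apply: mx2P; fld.
Qed.

Definition Kmx : 'M[F]_2 := mx2 (t^-1 - t) (-1) u (- (t^-1 - t)).

Lemma KC : Kmx * Cmx t = Dmx t u * Kmx.
Proof. by rewrite /Kmx /Cmx /Dmx !mx2M; apply: mx2P; fld. Qed.
Lemma KD : Kmx * Dmx t u = Cmx t * Kmx.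
Proof. by rewrite /Kmx /Cmx /Dmx !mx2M; apply: mx2P; fld. Qed.

Lemma K_W : Kmx * Wmx p q t u = wordW p q (Dmx t u) (Cmx t) * Kmx.
Proof.
apply: wordW_intertwine.
- exact: KC.
- exact: KD.
- by rewrite /Kmx Cmx_inv Dmx_inv !mx2M; apply: mx2P; fld.
- by rewrite /Kmx Cmx_inv Dmx_inv !mx2M; apply: mx2P; fld.
Qed.

Lemma KK : Kmx * Kmx = mx2 ((t - t^-1)^+2 - u) 0 0 ((t - t^-1)^+2 - u).
Proof. by rewrite /Kmx mx2M; apply: mx2P; ring. Qed.

Lemma det_W : \det (Wmx p q t u) = 1.
Proof.
rewrite /Wmx /wordW; apply: (big_ind (fun M : 'M[F]_2 => \det M = 1)).
- exact: det1.
- by move=> x y hx hy; rewrite -mulmxE det_mulmx hx hy mulr1.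
move=> i _; rewrite /mpowb invmx_inv; case: (odd i); case: (esign p q i);
  rewrite ?Cmx_inv ?Dmx_inv /Cmx /Dmx det_mx2; fld.
Qed.

Lemma lambda0_form : Apq p q t u = (t - t^-1) * Bpq p q t u ->
  (t - t^-1)^+2 - u != 0 ->
  wordWrev p q (Cmx t) (Dmx t u) * Wmx p q t u =
     mx2 (((t - t^-1)^+2 - u) * (Bpq p q t u)^+2)
         (((t - t^-1)^+2 - u)^-1 * (- (t - t^-1) * Bpq p q t u - Dpq p q t u) *
            (- ((t - t^-1)^+2 - u) * Bpq p q t u + (Bpq p q t u)^-1)) 0
         (((t - t^-1)^+2 - u) * (Bpq p q t u)^+2)^-1.
Proof.
move=> hA dn0.
rewrite wordWrev_swap //.
set dl := (t - t^-1)^+2 - u.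
set Wt := wordW p q (Dmx t u) (Cmx t).
have e : dl *: (Wt * Wmx p q t u) = (Kmx * Wmx p q t u) * (Kmx * Wmx p q t u).
  rewrite [in RHS]mulrA [in RHS]K_W -/Wt -[Wt * Kmx * Kmx]mulrA KK.
  have -> : mx2 ((t - t^-1)^+2 - u) 0 0 ((t - t^-1)^+2 - u) = dl *: 1.
    by rewrite mx2_1 mx2Z !mulr1 !mulr0.
  by rewrite -scalerAr mulr1 -scalerAl.
have e2 : Wt * Wmx p q t u = dl^-1 *: ((Kmx * Wmx p q t u) * (Kmx * Wmx p q t u)).
  by rewrite -e scalerA mulVf // scale1r.
rewrite e2.
have h10 := W_10.
have hdet := det_W.
move: hA h10 hdet; rewrite /Apq /Bpq /Dpq [Wmx p q t u]mx2E det_mx2 ?mx2_00 ?mx2_01 ?mx2_10 ?mx2_11.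
move: (Wmx p q t u 0 0) (Wmx p q t u 0 1) (Wmx p q t u 1 0) (Wmx p q t u 1 1) => a b c d -> -> hdet.
have b0 : b != 0.
  by apply/eqP => b0; move: hdet; rewrite b0; rewrite !(mulr0, mul0r, subr0) => /eqP; rewrite eq_sym oner_eq0.
have hk : u * b + (t - t^-1) * d = b^-1.
  apply: (mulfI b0); rewrite mulfV // -[RHS]hdet; ring.
rewrite /Kmx !mx2M mx2Z.
have hs : t^-1 - t = - (t - t^-1) by ring.
rewrite -/dl in dn0.
have hdl : (t - t^-1) ^+ 2 = dl + u by rewrite /dl; ring.
clearbody dl.
rewrite hs; move: hk hdet hdl; move: (t - t^-1) => s hk hdet hdl.
apply: mx2P.
- have -> : ((- s * (s * b) + -1 * (- u * b)) * (- s * (s * b) + -1 * (- u * b)) +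
     (- s * b + -1 * d) * (u * (s * b) + - - s * (- u * b))) = dl ^+ 2 * b ^+ 2.
    have -> : dl = s ^+ 2 - u by rewrite hdl; ring.
    ring.
  by field.
- have -> : (- s * (s * b) + -1 * (- u * b)) = - dl * b.
    have -> : dl = s ^+ 2 - u by rewrite hdl; ring.
    ring.
  have -> : u * b + - - s * d = b^-1 by rewrite -hk; ring.
  ring.
- have -> : u * (s * b) + - - s * (- u * b) = 0 by ring.
  by rewrite !(mul0r, mulr0, addr0).
- have -> : u * (s * b) + - - s * (- u * b) = 0 by ring.
  have -> : u * b + - - s * d = b^-1 by rewrite -hk; ring.
  rewrite !(mul0r, add0r); field.
  by rewrite dn0 b0.
Qed.

Lemma C_comm_lambda0 : Apq p q t u = (t - t^-1) * Bpq p q t u ->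
  (t - t^-1)^+2 - u != 0 ->
  GRing.comm (Cmx t) (wordWrev p q (Cmx t) (Dmx t u) * Wmx p q t u).
Proof.
move=> hA dn0.
rewrite wordWrev_swap //.
set dl := (t - t^-1)^+2 - u.
set Wt := wordW p q (Dmx t u) (Cmx t).
have hKK : Kmx * Kmx = dl *: 1 by rewrite KK mx2_1 mx2Z !mulr1 !mulr0.
have hR := riley_rel hA.
have e : Cmx t * Wt = Wt * Dmx t u.
  apply: (scalerI dn0).
  have -> : dl *: (Cmx t * Wt) = Cmx t * Wt * (Kmx * Kmx).
    by rewrite hKK -scalerAr mulr1.
  have -> : dl *: (Wt * Dmx t u) = Wt * (Kmx * Kmx) * Dmx t u.
    by rewrite hKK -scalerAr mulr1 -scalerAl.
  rewrite !mulrA -(mulrA (Cmx t) Wt Kmx) -K_W mulrA -KD.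
  rewrite -(mulrA Kmx (Dmx t u)) -hR mulrA -(mulrA (Kmx * Wmx p q t u)) -KD.
  by rewrite !mulrA K_W.
rewrite /GRing.comm mulrA e -!mulrA hR //.
Qed.

Lemma riley_surgery (m n : int) :
  Apq p q t u = (t - t^-1) * Bpq p q t u -> t - t^-1 != 0 ->
  (t - t^-1)^+2 - u != 0 ->
  t ^ m * (t ^ (- (2 * sigma p q)) * ((t - t^-1) ^+ 2 - u) * (Bpq p q t u) ^+ 2) ^ n = 1 ->
  Cmx t ^ m * longitude p q (Cmx t) (Dmx t u) ^ n = 1.
Proof.
move=> hA s0 dn0 hL.
have hc := C_comm_lambda0 hA dn0.
have hl0 := lambda0_form hA dn0.
set x := (X in mx2 _ X 0 _) in hl0.
set L0 := ((t - t^-1)^+2 - u) * (Bpq p q t u)^+2 in hl0 hL.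
have L00 : L0 != 0.
  rewrite /L0 mulf_neq0 // expf_neq0 //; apply/eqP => b0.
  have := det_W; rewrite det_mx2' -[Wmx p q t u 0 0]/(Apq p q t u).
  rewrite -[Wmx p q t u 0 1]/(Bpq p q t u) hA b0 !(mulr0, mul0r, subr0) => /eqP.
  by rewrite eq_sym oner_eq0.
have ti0 : t^-1 != 0 by rewrite invr_eq0.
have [y hC2] := @ut_exprz F t 1 t^-1 (- (2 * sigma p q)) t0 ti0.
have [y' hCm] := @ut_exprz F t 1 t^-1 m t0 ti0.
have hlam : longitude p q (Cmx t) (Dmx t u) =
   mx2 (L0 * t ^ (- (2 * sigma p q))) (L0 * y + x * t^-1 ^ (- (2 * sigma p q))) 0
       (L0^-1 * t^-1 ^ (- (2 * sigma p q))).
  rewrite /longitude -/(Wmx p q t u) hl0 /Cmx hC2 mx2M; apply: mx2P; ring.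
have nz1 : L0 * t ^ (- (2 * sigma p q)) != 0 by rewrite mulf_neq0 // expfz_neq0.
have nz2 : L0^-1 * t^-1 ^ (- (2 * sigma p q)) != 0.
  by rewrite mulf_neq0 ?invr_eq0 // expfz_neq0.
have [z hln] := @ut_exprz F _ (L0 * y + x * t^-1 ^ (- (2 * sigma p q))) _ n nz1 nz2.
have hcl : GRing.comm (Cmx t) (longitude p q (Cmx t) (Dmx t u)).
  rewrite /longitude; apply: commrM => //; apply: commrXz; exact: commr_refl.
have hcM : GRing.comm (Cmx t) (Cmx t ^ m * longitude p q (Cmx t) (Dmx t u) ^ n).
  apply: commrM; [apply: commrXz; exact: commr_refl | exact: commrXz].
move: hcM; rewrite /Cmx in hCm hln hlam *; rewrite hCm hlam hln mx2M.
set zz := - (2 * sigma p q) in hC2 hL hlam nz1 nz2 hln *.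
set w := L0 * t ^ zz in nz1 hln hlam *.
have hw : t ^ m * w ^ n = 1 by rewrite -hL /w /L0; congr (_ * _ ^ _); ring.
have hwi : L0^-1 * t^-1 ^ zz = w^-1.
  by rewrite /w [in RHS]invfM invr_expz exprz_inv.
rewrite hwi.
have hw' : t^-1 ^ m * w^-1 ^ n = 1 by rewrite !exprz_inv -!invr_expz -invfM hw invr1.
rewrite !(mulr0, mul0r, addr0, add0r) hw hw'.
set X := (X in mx2 1 X 0 1).
rewrite /GRing.comm !mx2M => /(congr1 (fun M : 'M[F]_2 => M 0 1)); rewrite !mx2_01.
move=> hX.
have X0 : X = 0.
  have h : X * (t - t^-1) = 0.
    have e : X * (t - t^-1) = (t * X + 1 * 1) - (1 * 1 + X * t^-1) by ring.
    by rewrite e hX subrr.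
  by move/eqP: h; rewrite mulf_eq0 (negbTE s0) orbF => /eqP.
by rewrite X0 -mx2_1.
Qed.
End Riley.

Section Par.
Variable F : fieldType.

Lemma par_exprn (e b : F) (k : nat) : e * e = 1 ->
  (mx2 e b 0 e)^+k = mx2 (e^+k) (e^+k * (k%:R * e * b)) 0 (e^+k).
Proof.
move=> ee; elim: k => [|k IH]; first by rewrite !expr0 mx2_1 mul0r mul0r mulr0.
rewrite exprS IH mx2M !exprS; apply: mx2P; rewrite ?mulr0 ?addr0 ?mul0r ?add0r //.
rewrite -natr1.
transitivity ((e * e) * (e ^+ k * k%:R * b) + b * e ^+ k); first by ring.
transitivity ((e * e) * (e ^+ k * (k%:R + 1) * b)); last by ring.
rewrite ee; ring.
Qed.

Lemma sq1_inv (a : F) : a * a = 1 -> a^-1 = a.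
Proof. by move=> h; rewrite -[LHS]mulr1 -h mulrA mulVf ?mul1r //; apply/eqP => a0; move: h; rewrite a0 mul0r => /eqP; rewrite eq_sym oner_eq0. Qed.

Lemma par_exprz (e b : F) (z : int) : e * e = 1 ->
  (mx2 e b 0 e)^z = mx2 (e^z) (e^z * (z%:~R * e * b)) 0 (e^z).
Proof.
move=> ee; case: z => k; first by rewrite /exprz /= par_exprn.
rewrite /exprz /= par_exprn //.
set a := e ^+ k.+1.
have aa : a * a = 1 by rewrite /a -exprMn ee expr1n.
rewrite inv_mx2; last by rewrite mulr0 subr0 aa oner_neq0.
rewrite mulr0 subr0 aa !divr1 oppr0 (sq1_inv _ aa); apply: mx2P => //.
rewrite NegzE intrN -pmulrn; ring.
Qed.

Lemma sign_exprz (z : int) : (-1 : F) ^ z = (-1) ^+ (odd `|z|%N).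
Proof.
case: z => k; first by rewrite /exprz /= signr_odd.
by rewrite /exprz /= invr_sign -signr_odd.
Qed.
End Par.

Lemma riley_parabolic (F : fieldType) p q (u : F) (m n : int) :
  odd p -> odd `|q|%N -> coprime p `|q| ->
  Apq p q (-1) u = 0 -> odd `|m|%N -> odd `|n|%N -> n%:~R != 0 :> F ->
  - (m%:~R / n%:~R - 2 * (sigma p q)%:~R) * u * Bpq p q (-1) u = 2 * Dpq p q (-1) u ->
  Wmx p q (-1) u * Cmx (-1) = Dmx (-1) u * Wmx p q (-1) u /\
  Cmx (-1) ^ m * longitude p q (Cmx (-1)) (Dmx (-1) u) ^ n = 1.
Proof.
move=> op oq cop hA om on n0 hh.
have t0 : (-1 : F) != 0 by rewrite oppr_eq0 oner_neq0.
have s0 : (-1 : F) - (-1)^-1 = 0 by rewrite invrN1 subrr.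
have hA' : Apq p q (-1) u = ((-1) - (-1)^-1) * Bpq p q (-1) u by rewrite s0 mul0r.
split; first exact: riley_rel.
have hdet := @det_W F p q (-1) u t0.
have h10 := @W_10 F p q op oq cop (-1) u t0.
rewrite det_mx2' h10 -[Wmx p q (-1) u 0 0]/(Apq p q (-1) u) hA in hdet.
rewrite -[Wmx p q (-1) u 0 1]/(Bpq p q (-1) u) in hdet.
set B := Bpq p q (-1) u in hdet hh *.
set D := Dpq p q (-1) u in hh *.
have hub : u * B ^+ 2 = 1 by rewrite -hdet; ring.
have hmn : m%:~R = n%:~R * (2 * (sigma p q)%:~R - 2 * B * D).
  have h' : m%:~R / n%:~R = 2 * (sigma p q)%:~R - 2 * B * D.
    have e : 2 * B * D = B * (2 * D) by ring.
    rewrite -hh in e; rewrite e.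
    have -> : B * (- (m%:~R / n%:~R - 2 * (sigma p q)%:~R) * u * B) =
       - (m%:~R / n%:~R - 2 * (sigma p q)%:~R) * (u * B ^+ 2) by ring.
    rewrite hub; ring.
  by rewrite -h' mulrC divfK.
have u0 : u != 0 by apply/eqP => u0; move: hub; rewrite u0 mul0r => /eqP; rewrite eq_sym oner_eq0.
have B0 : B != 0 by apply/eqP => b0; move: hub; rewrite b0 expr0n mulr0 => /eqP; rewrite eq_sym oner_eq0.
have dn0 : ((-1 : F) - (-1)^-1)^+2 - u != 0 by rewrite s0 expr0n /= add0r oppr_eq0.
have hl0 := @lambda0_form F p q op oq cop (-1) u t0 hA' dn0.
rewrite s0 -/B -/D in hl0.
have hBi : B^-1 = u * B.
  by apply: (mulfI B0); rewrite mulfV // -hub; ring.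
have e1 : ((0 : F) ^+ 2 - u) * B ^+ 2 = -1 by rewrite expr0n /= add0r mulNr hub.
rewrite e1 invrN1 in hl0.
have hx : ((0:F) ^+ 2 - u)^-1 * (- 0 * B - D) * (- ((0:F) ^+ 2 - u) * B + B^-1) = 2 * B * D.
  by rewrite hBi expr0n /= add0r; fld; rewrite oppr_eq0.
rewrite hx in hl0.
have hC : Cmx (-1 : F) = mx2 (-1) 1 0 (-1) by rewrite /Cmx invrN1.
have ee : (-1 : F) * (-1) = 1 by rewrite mulrNN mulr1.
have hC2 : Cmx (-1 : F) ^ (- (2 * sigma p q)) = mx2 1 (2 * (sigma p q)%:~R) 0 1.
  rewrite hC par_exprz // sign_exprz.
  have -> : odd `|(- (2 * sigma p q))%R|%N = false by lia.
  rewrite expr0 mul1r; apply: mx2P => //.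
  rewrite intrN intrM; ring.
have hlam : longitude p q (Cmx (-1)) (Dmx (-1) u) =
    mx2 (-1) (2 * B * D - 2 * (sigma p q)%:~R) 0 (-1).
  rewrite /longitude -/(Wmx p q (-1) u) hl0 hC2 mx2M; apply: mx2P; ring.
rewrite hlam hC !par_exprz // !sign_exprz om on expr1 mx2M.
rewrite mx2_1; apply: mx2P; try ring.
rewrite hmn; ring.
Qed.

Section Transfer.
Variables (F G : fieldType) (f : 'M[F]_2 -> 'M[G]_2).
Hypotheses (fM : forall x y, f (x * y) = f x * f y) (f1 : f 1 = 1)
  (fV : forall x, f (x^-1) = (f x)^-1).

Lemma f_mpowb X e : f (mpowb X e) = mpowb (f X) e.
Proof. by rewrite /mpowb !invmx_inv; case: e; rewrite ?fV. Qed.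

Lemma f_wordW p q X Y : f (wordW p q X Y) = wordW p q (f X) (f Y).
Proof.
rewrite /wordW (big_morph f fM f1); apply: eq_bigr => i _.
by rewrite f_mpowb; case: (odd i).
Qed.

Lemma f_wordWrev p q X Y : f (wordWrev p q X Y) = wordWrev p q (f X) (f Y).
Proof.
rewrite /wordWrev (big_morph f fM f1); apply: eq_bigr => i _.
by rewrite f_mpowb; case: (odd (p - i)).
Qed.

Lemma f_exprn X k : f (X ^+ k) = (f X) ^+ k.
Proof. by elim: k => [|k IH]; rewrite ?expr0 ?f1 // !exprS fM IH. Qed.

Lemma f_exprz X (z : int) : f (X ^ z) = (f X) ^ z.
Proof. by case: z => k; rewrite /exprz /= ?fV f_exprn. Qed.

Lemma f_longitude p q X Y : f (longitude p q X Y) = longitude p q (f X) (f Y).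
Proof. by rewrite /longitude !fM f_wordWrev f_wordW f_exprz. Qed.


Lemma rel_forward p q (a b : 'M[F]_2) (m n : int) :
  wordW p q a b * a = b * wordW p q a b ->
  a ^ m * longitude p q a b ^ n = 1 ->
  wordW p q (f a) (f b) * f a = f b * wordW p q (f a) (f b) /\
  f a ^ m * longitude p q (f a) (f b) ^ n = 1.
Proof.
move=> h1 h2; split.
  by rewrite -f_wordW -!fM h1.
by rewrite -f_longitude -!f_exprz -fM h2 f1.
Qed.

Lemma rel_backward p q (a b : 'M[F]_2) (m n : int) : injective f ->
  wordW p q (f a) (f b) * f a = f b * wordW p q (f a) (f b) ->
  f a ^ m * longitude p q (f a) (f b) ^ n = 1 ->
  wordW p q a b * a = b * wordW p q a b /\
  a ^ m * longitude p q a b ^ n = 1.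
Proof.
move=> finj h1 h2; split.
  by apply: finj; rewrite !fM f_wordW.
by apply: finj; rewrite fM !f_exprz f_longitude h2 f1.
Qed.
End Transfer.

Section Conj.
Variables (G : fieldType) (Q : 'M[G]_2).
Hypothesis uQ : Q \is a GRing.unit.
Let uQi : Q^-1 \is a GRing.unit. Proof. by rewrite unitrV. Qed.

Lemma conjM x y : Q^-1 * (x * y) * Q = (Q^-1 * x * Q) * (Q^-1 * y * Q).
Proof. by rewrite !mulrA (mulrK uQ). Qed.

Lemma conj1 : Q^-1 * 1 * Q = 1.
Proof. by rewrite mulr1 mulVr. Qed.

Lemma conjV x : Q^-1 * x^-1 * Q = (Q^-1 * x * Q)^-1.
Proof.
have [ux|nux] := boolP (x \is a GRing.unit).
  have u1 : Q^-1 * x \is a GRing.unit by rewrite unitrMr.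
  rewrite invrM // invrM // invrK mulrA //.
have nu : Q^-1 * x * Q \isn't a GRing.unit by rewrite unitrMl // unitrMr.
by rewrite (invr_out nux) (invr_out nu).
Qed.
End Conj.

Section Cx.
Variable R : realType.

Lemma cM (a b c d : R) : Complex a b * Complex c d = Complex (a * c - b * d) (a * d + b * c).
Proof. by []. Qed.
Lemma cD (a b c d : R) : Complex a b + Complex c d = Complex (a + c) (b + d).
Proof. by []. Qed.
Lemma cN (a b : R) : - Complex a b = Complex (- a) (- b).
Proof. by []. Qed.
Lemma c1 : (1 : R[i]) = Complex 1 0. Proof. by []. Qed.
Lemma c0 : (0 : R[i]) = Complex 0 0. Proof. by []. Qed.
Lemma cR (a : R) : real_complex R a = Complex a 0. Proof. by []. Qed.
Lemma cE (a b c d : R) : a = c -> b = d -> Complex a b = Complex c d.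
Proof. by move=> -> ->. Qed.

Lemma map_mx2 (a b c d : R) :
  map_mx (real_complex R) (mx2 a b c d) =
  mx2 (real_complex R a) (real_complex R b) (real_complex R c) (real_complex R d).
Proof.
apply/matrixP => i j; rewrite !mxE.
by case: (ord2_cases i) => ->; case: (ord2_cases j) => ->.
Qed.

Variables (c s u mu : R).
Hypotheses (cs1 : c ^+ 2 + s ^+ 2 = 1) (s0 : s != 0)
  (hmu : mu ^+ 2 * (u + 4 * s ^+ 2) = u) (mu0 : 0 < mu).

Lemma mu1 : 1 - mu != 0.
Proof.
apply/eqP => h; have m1 : mu = 1 by apply/eqP; rewrite -subr_eq0 -oppr_eq0 opprB h.
have h4 : 4 * s ^+ 2 = 0.
  have e : 4 * s ^+ 2 = mu ^+ 2 * (u + 4 * s ^+ 2) - u + (1 - mu ^+ 2) * (u + 4 * s ^+ 2) by ring.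
  by rewrite e hmu subrr add0r m1 expr1n subrr mul0r.
by move/eqP: h4; rewrite mulf_eq0 expf_eq0 /= (negbTE s0) orbF pnatr_eq0.
Qed.

Lemma mu1' : 1 + mu != 0.
Proof. by rewrite gt_eqF // addr_gt0 // ltr01. Qed.

Lemma hu : u = 4 * s ^+ 2 * mu ^+ 2 / (1 - mu ^+ 2).
Proof.
have e : 1 - mu ^+ 2 != 0.
  by rewrite -[1](expr1n _ 2) subr_sqr mulf_neq0 // ?mu1 ?mu1'.
apply: (mulIf e); rewrite divfK //.
have := hmu; rewrite mulrDr => h.
rewrite mulrBr mulr1; rewrite -[u in u - _]h; ring.
Qed.

Definition tc : R[i] := Complex c s.
Lemma tc_inv : tc^-1 = Complex c (- s).
Proof.
have h : tc * Complex c (- s) = 1.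
  by rewrite /tc cM c1; apply: cE; rewrite -?cs1; ring.
have ut : tc \is a GRing.unit.
  by rewrite unitfE; apply/eqP => t0; move: h; rewrite t0 mul0r => /eqP; rewrite eq_sym oner_eq0.
by rewrite -[RHS](mulKr ut) h mulr1.
Qed.

Definition Qc : 'M[R[i]]_2 :=
  mx2 (Complex (1 + mu) 0) (Complex 0 (1 - mu)) (Complex 0 (- (2 * s * mu)))
      (Complex (- (2 * s * mu)) 0).
Definition ap : 'M[R]_2 := mx2 c (- s) s c.
Definition bp : 'M[R]_2 := mx2 c (- (s * (1 - mu) / (1 + mu))) (s * (1 + mu) / (1 - mu)) c.

Lemma Qc_unit : Qc \is a GRing.unit.
Proof.
rewrite unitmxE det_mx2 !cM cN cD unitfE; apply/eqP => /(congr1 (@complex.Re R)) /=.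
move/eqP; apply/negP.
have -> : (1 + mu) * - (2 * s * mu) - 0 * 0 - (0 * 0 - (1 - mu) * - (2 * s * mu)) =
  - (4 * s * mu) by ring.
by rewrite oppr_eq0 !mulf_neq0 // ?pnatr_eq0 // gt_eqF.
Qed.

Lemma CQ : Cmx tc * Qc = Qc * map_mx (real_complex R) ap.
Proof.
rewrite /Cmx tc_inv /Qc /ap map_mx2 !cR /tc c1 c0 !mx2M; apply: mx2P;
  rewrite !cM !cD; apply: cE; ring.
Qed.

Lemma DQ : Dmx tc (real_complex R u) * Qc = Qc * map_mx (real_complex R) bp.
Proof.
have m1 := mu1; have m2 := mu1'.
have m3 : 1 - mu ^+ 2 != 0 by rewrite -[1](expr1n _ 2) subr_sqr mulf_neq0.
rewrite /Dmx tc_inv /Qc /bp map_mx2 !cR /tc c0 cN !mx2M; apply: mx2P;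
  rewrite !cM !cD; apply: cE; rewrite ?hu; fld.
Qed.
End Cx.

Lemma Cmx_det (F : fieldType) (t : F) : t != 0 -> \det (Cmx t) = 1.
Proof. by move=> t0; rewrite /Cmx det_mx2 mulfV // mulr0 subr0. Qed.

Lemma Dmx_det (F : fieldType) (t u : F) : t != 0 -> \det (Dmx t u) = 1.
Proof. by move=> t0; rewrite /Dmx det_mx2 mulfV // mul0r subr0. Qed.

Lemma Cmx_neq1 (F : fieldType) (t : F) : Cmx t <> 1.
Proof.
rewrite mx2_1 /Cmx => /(congr1 (fun M : 'M[F]_2 => M 0 1)); rewrite !mx2_01 => /eqP.
by rewrite oner_eq0.
Qed.

Lemma L_from_z (F : fieldType) (t z L : F) (m n : int) :
  z ^ n = t ^ m -> z * L = 1 -> t ^ m * L ^ n = 1.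
Proof. by move=> hz hzL; rewrite -hz -expfzMl hzL exp1rz. Qed.

Theorem mainTheorem7 (R : realType) (p : nat) (q : int) (r : rat) :
  odd p -> odd `|q|%N -> - (p%:Z) < q < p%:Z -> coprime p `|q| ->
  real_solution R p q r \/ unit_circle_solution R p q r \/
  parabolic_solution R p q r ->
  nontrivial_SL2_rep_surgery R p q r.
Proof.
move=> op oq _ cop [hr|[hc|hp]].
-
  case: hr => t [u [tm1 t0 t1 hA [z [hz hL]]]].
  exists (Cmx t), (Dmx t u); split.
  + exact: Cmx_det.
  + exact: Dmx_det.
  + exact: riley_rel.
  + have s0 : t - t^-1 != 0.
      apply/eqP => h.
      have : (t - 1) * (t + 1) = 0.
        have e : (t - 1) * (t + 1) = t * (t - t^-1) by field.
        by rewrite e h mulr0.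
      move/eqP; rewrite mulf_eq0 => /orP[]; rewrite ?subr_eq0 ?addr_eq0.
        by rewrite (negbTE t1).
      by rewrite (negbTE tm1).
    have dn0 : (t - t^-1) ^+ 2 - u != 0.
      apply/eqP => h; move: hL; rewrite h mulr0 mul0r => /eqP; by rewrite eq_sym oner_eq0.
    apply: riley_surgery => //.
    apply: (@L_from_z _ t z _ (numq r) (denq r) hz); rewrite -hL; ring.
  + by case; move/Cmx_neq1.
-
  case: hc => theta [u [t [ht tpm uc hA [z [hz hL]]]]].
  have cs1 : cos theta ^+ 2 + sin theta ^+ 2 = 1 := cos2Dsin2 theta.
  move: ht cs1 uc; set c := cos theta; set s := sin theta => ht cs1 uc.
  have s0 : s != 0.
    apply/eqP => s0.
    have c2 : (c - 1) * (c + 1) = 0.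
      have e : (c - 1) * (c + 1) = (c ^+ 2 + s ^+ 2) - 1 - s ^+ 2 by ring.
      by rewrite e cs1 s0; ring.
    move/eqP: c2; rewrite mulf_eq0 => /orP[]; [rewrite subr_eq0 | rewrite addr_eq0] => /eqP hc.
      by move: tpm; rewrite ht hc s0 -c1 eqxx.
    have e : Complex (-1) 0 = -1 :> R[i] by rewrite c1 cN oppr0.
    by move: tpm; rewrite ht hc s0 e eqxx andbF.
  have s2 : 0 < s ^+ 2 by rewrite exprn_even_gt0 //.
  have [hne kpos] : u + 4 * s ^+ 2 != 0 /\ 0 < u / (u + 4 * s ^+ 2).
    case/orP: uc => hu.
      have h1 : u + 4 * s ^+ 2 < 0 by lra.
      split; first by rewrite lt_eqF.
      have : 0 < (- u) / (- (u + 4 * s ^+ 2)) by apply: divr_gt0; lra.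
      by rewrite invrN mulrNN.
    have h1 : 0 < u + 4 * s ^+ 2 by lra.
    split; first by rewrite gt_eqF.
    by apply: divr_gt0.
  set mu := Num.sqrt (u / (u + 4 * s ^+ 2)).
  have mu0 : 0 < mu by rewrite sqrtr_gt0.
  have hmu : mu ^+ 2 * (u + 4 * s ^+ 2) = u by rewrite sqr_sqrtr ?ltW // divfK.
  have t0 : t != 0.
    rewrite ht; apply/eqP => /(congr1 (@complex.Im R)) /= h.
    by move: s0; rewrite h eqxx.
  have ti : t^-1 = Complex c (- s) by rewrite ht (@tc_inv R c s cs1).
  have hs : t - t^-1 = Complex 0 (2 * s) by rewrite ti ht cN cD; apply: cE; ring.
  have s0' : t - t^-1 != 0.
    rewrite hs; apply/eqP => /(congr1 (@complex.Im R)) /= /eqP.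
    by rewrite mulf_eq0 pnatr_eq0 (negbTE s0).
  have dn0 : (t - t^-1) ^+ 2 - real_complex R u != 0.
    rewrite hs expr2 cM cR cN cD; apply/eqP => /(congr1 (@complex.Re R)) /= h.
    by move/eqP: hne; apply; nra.
  have hL' : t ^ numq r * (t ^ (- (2 * sigma p q)) * ((t - t^-1) ^+ 2 - real_complex R u)
       * Bpq p q t (real_complex R u) ^+ 2) ^ denq r = 1.
    by apply: (@L_from_z _ t z _ (numq r) (denq r) hz); rewrite -hL; ring.
  have rel1 := @riley_rel _ p q op oq cop t (real_complex R u) t0 hA.
  have rel2 := @riley_surgery _ p q op oq cop t (real_complex R u) t0 (numq r) (denq r) hA s0' dn0 hL'.
  have uQ := @Qc_unit R s mu s0 mu0.
  have [r1 r2] := @rel_forward _ _ (fun X => (Qc R s mu)^-1 * X * Qc R s mu)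
    (@conjM _ _ uQ) (@conj1 _ _ uQ) (@conjV _ _ uQ) p q _ _ (numq r) (denq r) rel1 rel2.
  have fC : (Qc R s mu)^-1 * Cmx t * Qc R s mu = map_mx (real_complex R) (ap R c s).
    by rewrite -mulrA ht CQ // mulKr.
  have fD : (Qc R s mu)^-1 * Dmx t (real_complex R u) * Qc R s mu = map_mx (real_complex R) (bp R c s mu).
    by rewrite -mulrA ht DQ // mulKr.
  rewrite /= fC fD in r1 r2.
  have [r1' r2'] := @rel_backward _ _ (map_mx (real_complex R))
    (fun x y => map_mxM _ x y) (map_mx1 _ _) (fun x => map_invmx _ x) p q _ _ (numq r) (denq r)
    map_mx_inj r1 r2.
  have m1 := @mu1 R s u mu s0 hmu.
  have m2 := @mu1' R mu mu0.
  exists (ap R c s), (bp R c s mu); split => //.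
  + by rewrite /ap det_mx2 -cs1; ring.
  + by rewrite /bp det_mx2 -[RHS]cs1; field; rewrite m1 m2.
  + case => h _; move: h; rewrite mx2_1 /ap => /(congr1 (fun M : 'M[R]_2 => M 0 1)).
    by rewrite !mx2_01 => /eqP; rewrite oppr_eq0 (negbTE s0).

-
  case: hp => om odn [u [hA hh]].
  have t0 : (-1 : R) != 0 by rewrite oppr_eq0 oner_neq0.
  have n0 : (denq r)%:~R != 0 :> R by rewrite intr_eq0 denq_neq0.
  have e2 : ((2 * sigma p q)%:~R : R) = 2 * (sigma p q)%:~R by rewrite intrM.
  rewrite e2 in hh.
  have [h1 h2] := @riley_parabolic R p q u (numq r) (denq r) op oq cop hA om odn n0 hh.
  exists (Cmx (-1)), (Dmx (-1) u); split => //.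
  + exact: Cmx_det.
  + exact: Dmx_det.
  + by case; move/Cmx_neq1.
Qed.
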